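(* Consider the symmetric robot rendezvous system $$\dot{x}_k(t)=\tfrac{1}{2}\big(x_{k-1}(t)+x_{k+1}(t)\big)-x_k(t),\quad k\in\mathbb{Z},\ t\ge0,$$ with initial constellation $x_0=(x_k(0))_{k\in\mathbb{Z}}\in\ell^\infty(\mathbb{Z})$. Then $x_0$ is good if and only if there exists $c\in\mathbb{C}$ such that $$\sup_{k\in\mathbb{Z}}\bigg|\frac{1}{n}\sum_{j=1}^n\frac{1}{2^j}\sum_{\ell=0}^j\binom{j}{\ell}x_{k-j+2\ell}(0)-c\bigg|\to0\quad\text{as } n\to\infty, \tag{$*$}$$ and in this case $\sup_{k\in\mathbb{Z}}|x_k(t)-c|\to0$ as $t\to\infty$. Furthermore, if the quantity on the left of $( * )$ is $O(n^{-1})$ as $n\to\infty$, then $\sup_{k\in\mathbb{Z}}|x_k(t)-c|=O(t^{-1})$ as $t\to\infty$.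
   Context: $\ell^\infty(\mathbb{Z})$ is the Banach space of bounded doubly infinite complex sequences with the supremum norm. $S$ denotes the right-shift $S(x_k)=(x_{k-1})$ and $S^{-1}$ the left-shift $S^{-1}(x_k)=(x_{k+1})$ on $\ell^\infty(\mathbb{Z})$. For $x_0\in\ell^\infty(\mathbb{Z})$, the solution of the system is $x(t)=(x_k(t))_{k\in\mathbb{Z}}=\exp\big(t(\tfrac12(S+S^{-1})-I)\big)x_0$, $t\ge0$. An initial constellation $x_0$ is called good if there exist constants $c_k\in\mathbb{C}$, $k\in\mathbb{Z}$, such that the corresponding solution satisfies $\sup_{k\in\mathbb{Z}}|x_k(t)-c_k|\to0$ as $t\to\infty$. $a(t)=O(b(t))$ means there is $C>0$ with $a(t)\le Cb(t)$ for all sufficiently large arguments. *)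

(* Defs.v *)
From Stdlib Require Import Reals ZArith List ClassicalEpsilon.
Open Scope R_scope.

(* Complex numbers as pairs (re, im). *)
Definition Cx : Type := (R * R)%type.
Definition C0 : Cx := (0, 0).
Definition Cadd (z w : Cx) : Cx := (fst z + fst w, snd z + snd w).
Definition Csub (z w : Cx) : Cx := (fst z - fst w, snd z - snd w).
Definition Cscal (r : R) (z : Cx) : Cx := (r * fst z, r * snd z).
Definition Cnorm (z : Cx) : R := sqrt (fst z ^ 2 + snd z ^ 2).

(* Csum f m n = f m + f (m+1) + ... + f n  (empty if n < m). *)
Definition Csum (f : nat -> Cx) (m n : nat) : Cx :=
  fold_right Cadd C0 (map f (seq m (S n - m))).

Definition linf_bounded (x : Z -> Cx) : Prop :=
  exists M : R, forall k : Z, Cnorm (x k) <= M.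

Definition Sshift (x : Z -> Cx) : Z -> Cx := fun k => x (k - 1)%Z.
Definition Sinv (x : Z -> Cx) : Z -> Cx := fun k => x (k + 1)%Z.

Definition Aop (x : Z -> Cx) : Z -> Cx :=
  fun k => Csub (Cscal (/ 2) (Cadd (Sshift x k) (Sinv x k))) (x k).

Definition Apow (n : nat) (x : Z -> Cx) : Z -> Cx := Nat.iter n Aop x.

Definition exp_partial (t : R) (x0 : Z -> Cx) (N : nat) : Z -> Cx :=
  fun k => Csum (fun n => Cscal (t ^ n / INR (fact n)) (Apow n x0 k)) 0 N.

(* x(t) = exp(tA) x0 for all t >= 0: the exponential series converges to x(t)
   in the sup norm of l^infty(Z). *)
Definition is_exp_sol (x0 : Z -> Cx) (x : R -> Z -> Cx) : Prop :=
  forall t : R, 0 <= t ->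
  forall eps : R, 0 < eps ->
  exists N0 : nat, forall N : nat, (N0 <= N)%nat ->
  forall k : Z, Cnorm (Csub (exp_partial t x0 N k) (x t k)) <= eps.

Definition expsol (x0 : Z -> Cx) : R -> Z -> Cx :=
  epsilon (inhabits (fun (_ : R) (_ : Z) => C0)) (is_exp_sol x0).

Definition good_constellation (x0 : Z -> Cx) : Prop :=
  exists c : Z -> Cx,
  forall eps : R, 0 < eps ->
  exists T : R, forall t : R, T <= t -> 0 <= t ->
  forall k : Z, Cnorm (Csub (expsol x0 t k) (c k)) <= eps.

Definition cesaro (x0 : Z -> Cx) (n : nat) (k : Z) : Cx :=
  Cscal (/ INR n)
    (Csum (fun j => Cscal (/ 2 ^ j)
       (Csum (fun l => Cscal (Binomial.C j l)
                 (x0 (k - Z.of_nat j + 2 * Z.of_nat l)%Z)) 0 j)) 1 n).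

Definition cesaro_conv (x0 : Z -> Cx) (c : Cx) : Prop :=
  forall eps : R, 0 < eps ->
  exists N0 : nat, forall n : nat, (N0 <= n)%nat -> (1 <= n)%nat ->
  forall k : Z, Cnorm (Csub (cesaro x0 n k) c) <= eps.

Definition cesaro_O (x0 : Z -> Cx) (c : Cx) : Prop :=
  exists M : R, exists N0 : nat, forall n : nat, (N0 <= n)%nat -> (1 <= n)%nat ->
  forall k : Z, Cnorm (Csub (cesaro x0 n k) c) <= M / INR n.

Definition sol_conv (x0 : Z -> Cx) (c : Cx) : Prop :=
  forall eps : R, 0 < eps ->
  exists T : R, forall t : R, T <= t -> 0 <= t ->
  forall k : Z, Cnorm (Csub (expsol x0 t k) c) <= eps.

Definition sol_O (x0 : Z -> Cx) (c : Cx) : Prop :=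
  exists M : R, exists T : R, forall t : R, T <= t -> 0 < t ->
  forall k : Z, Cnorm (Csub (expsol x0 t k) c) <= M / t.

(* Main.v *)
Require Import Defs.
From Coquelicot Require Import Coquelicot.
From Stdlib Require Import Reals ZArith Lra Lia FunctionalExtensionality ClassicalEpsilon List.
Open Scope R_scope.


Fixpoint lsum (g : nat -> R) (n : nat) : R :=
  match n with O => 0 | S n => lsum g n + g n end.

Lemma lsum_ext_lt g h n : (forall i, (i < n)%nat -> g i = h i) -> lsum g n = lsum h n.
Proof. induction n; simpl; intros H; auto. rewrite IHn, H; auto; intros; apply H; lia. Qed.

Lemma lsum_plus g h n : lsum (fun i => g i + h i) n = lsum g n + lsum h n.
Proof. induction n; simpl; [ring|rewrite IHn; ring]. Qed.
Lemma lsum_minus g h n : lsum (fun i => g i - h i) n = lsum g n - lsum h n.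
Proof. induction n; simpl; [ring|rewrite IHn; ring]. Qed.
Lemma lsum_scal a g n : lsum (fun i => a * g i) n = a * lsum g n.
Proof. induction n; simpl; [ring|rewrite IHn; ring]. Qed.
Lemma lsum_const a n : lsum (fun _ => a) n = INR n * a.
Proof. induction n; simpl lsum; [simpl; ring|rewrite IHn, S_INR; ring]. Qed.
Lemma lsum_shift g n : lsum g (S n) = g O + lsum (fun i => g (S i)) n.
Proof. induction n; simpl in *; [ring|rewrite IHn; ring]. Qed.
Lemma lsum_abs g n : Rabs (lsum g n) <= lsum (fun i => Rabs (g i)) n.
Proof. induction n; simpl. rewrite Rabs_R0; lra.
  eapply Rle_trans. apply Rabs_triang. lra. Qed.
Lemma lsum_le g h n : (forall i, (i < n)%nat -> g i <= h i) -> lsum g n <= lsum h n.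
Proof. induction n; simpl; intros H; [lra|]. assert (g n <= h n) by (apply H; lia).
  assert (lsum g n <= lsum h n) by (apply IHn; intros; apply H; lia). lra. Qed.
Lemma lsum_nonneg g n : (forall i, (i < n)%nat -> 0 <= g i) -> 0 <= lsum g n.
Proof. intros H. replace 0 with (lsum (fun _ => 0) n). apply lsum_le; auto.
  rewrite lsum_const; ring. Qed.
Lemma lsum_telesc g n : lsum (fun i => g (S i) - g i) n = g n - g O.
Proof. induction n; simpl; [ring|rewrite IHn; ring]. Qed.
Lemma lsum_sum_f g n : lsum g (S n) = sum_f_R0 g n.
Proof. induction n; simpl in *; [ring|rewrite <- IHn; simpl; ring]. Qed.

Lemma lsum_bound g n B : (forall i, (i < n)%nat -> Rabs (g i) <= B) -> Rabs (lsum g n) <= INR n * B.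
Proof. intros H. eapply Rle_trans. apply lsum_abs. rewrite <- lsum_const. apply lsum_le; auto. Qed.

Lemma lsum_tri (g : nat -> nat -> R) N :
  lsum (fun n => lsum (fun j => g j (n - j)%nat) (S n)) (S N) =
  lsum (fun j => lsum (fun m => g j m) (S (N - j))) (S N).
Proof.
  induction N.
  - simpl. ring.
  - change (lsum (fun n => lsum (fun j => g j (n - j)%nat) (S n)) (S (S N)))
      with (lsum (fun n => lsum (fun j => g j (n - j)%nat) (S n)) (S N) +
            lsum (fun j => g j (S N - j)%nat) (S (S N))).
    rewrite IHN.
    change (lsum (fun j => lsum (fun m => g j m) (S (S N - j))) (S (S N))) with
      (lsum (fun j => lsum (fun m => g j m) (S (S N - j))) (S N) +
       lsum (fun m => g (S N) m) (S (S N - S N))).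
    rewrite (lsum_ext_lt (fun j => lsum (fun m => g j m) (S (S N - j)))
      (fun j => lsum (fun m => g j m) (S (N - j)) + g j (S N - j)%nat)).
    2:{ intros i Hi. replace (S N - i)%nat with (S (N - i)) by lia. simpl. auto. }
    rewrite lsum_plus. replace (S N - S N)%nat with O by lia.
    change (lsum (fun m => g (S N) m) 1) with (0 + g (S N) O).
    change (lsum (fun j => g j (S N - j)%nat) (S (S N))) with
      (lsum (fun j => g j (S N - j)%nat) (S N) + g (S N) (S N - S N)%nat).
    replace (S N - S N)%nat with O by lia. ring.
Qed.

Lemma C_nonneg n k : 0 <= C n k.
Proof. unfold C. apply Rle_mult_inv_pos. apply pos_INR.
  apply Rmult_lt_0_compat; apply INR_fact_lt_0. Qed.

Lemma Cnn n : C n n = 1.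
Proof. unfold C. rewrite Nat.sub_diag. simpl. field. apply INR_fact_neq_0. Qed.
Lemma Cn0 n : C n 0 = 1.
Proof. unfold C. rewrite Nat.sub_0_r. simpl. field. apply INR_fact_neq_0. Qed.

Lemma pascal_sum (f : nat -> R) n :
  lsum (fun l => C (S n) l * f l) (S (S n)) =
  lsum (fun l => C n l * f l) (S n) + lsum (fun l => C n l * f (S l)) (S n).
Proof.
  rewrite (lsum_shift _ (S n)). rewrite (lsum_shift (fun l => C n l * f l)).
  change (lsum (fun i => C (S n) (S i) * f (S i)) (S n)) with
    (lsum (fun i => C (S n) (S i) * f (S i)) n + C (S n) (S n) * f (S n)).
  change (lsum (fun l => C n l * f (S l)) (S n)) with
    (lsum (fun l => C n l * f (S l)) n + C n n * f (S n)).
  rewrite (lsum_ext_lt (fun i => C (S n) (S i) * f (S i))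
     (fun i => C n i * f (S i) + C n (S i) * f (S i))).
  2:{ intros i Hi. rewrite <- pascal by auto. ring. }
  rewrite lsum_plus, !Cnn, !Cn0. ring.
Qed.

Lemma binom_sum n : lsum (fun l => C n l) (S n) = 2 ^ n.
Proof. rewrite lsum_sum_f. replace 2 with (1+1) by ring. rewrite binomial.
  apply sum_eq; intros; rewrite !pow1; ring. Qed.

Definition rs := Z -> R.
Definition linop (F : rs -> rs) := forall a b f g,
  F (fun k => a * f k + b * g k) = fun k => a * F f k + b * F g k.
Lemma linop_iter F n : linop F -> linop (Nat.iter n F).
Proof. intros HF. induction n; intros a b f g; simpl; auto.
  rewrite IHn. apply HF. Qed.
Lemma linop_minus F f g : linop F -> F (fun k => f k - g k) = fun k => F f k - F g k.
Proof. intros HF. replace (fun k => f k - g k) with (fun k => 1 * f k + (-1) * g k)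
  by (apply functional_extensionality; intros; ring). rewrite HF.
  apply functional_extensionality; intros; ring. Qed.
Lemma linop_scal F a f : linop F -> F (fun k => a * f k) = fun k => a * F f k.
Proof. intros HF. replace (fun k => a * f k) with (fun k => a * f k + 0 * f k)
  by (apply functional_extensionality; intros; ring). rewrite HF.
  apply functional_extensionality; intros; ring. Qed.
Lemma linop_lsum F (g : nat -> rs) n : linop F ->
  F (fun k => lsum (fun i => g i k) n) = fun k => lsum (fun i => F (g i) k) n.
Proof. intros HF. induction n; simpl.
  - replace (fun _ : Z => 0) with (fun k : Z => 0 * (fun _ => 0) k + 0 * (fun _ => 0) k)
      by (apply functional_extensionality; intros; ring).
    rewrite HF. apply functional_extensionality; intros; ring.
  - replace (fun k => lsum (fun i => g i k) n + g n k) with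
      (fun k => 1 * (fun k => lsum (fun i => g i k) n) k + 1 * g n k)
      by (apply functional_extensionality; intros; ring).
    rewrite HF, IHn. apply functional_extensionality; intros; ring.
Qed.
Definition bnd (y : rs) (B : R) := forall k, Rabs (y k) <= B.
Definition contr (F : rs -> rs) := forall y B, bnd y B -> bnd (F y) B.
Lemma contr_iter F n : contr F -> contr (Nat.iter n F).
Proof. intros HF; induction n; intros y B H; simpl; auto. Qed.


Definition G (a b : Z) (y : rs) : rs := fun k => / 2 * (y (k + a)%Z + y (k + b)%Z).

Lemma G_iter a b n y k : Nat.iter n (G a b) y k =
  / 2 ^ n * lsum (fun l => C n l * y (k + Z.of_nat n * a + Z.of_nat l * (b - a))%Z) (S n).
Proof.
  revert k; induction n; intros k.
  - simpl. rewrite Cn0. rewrite !Z.add_0_r. field.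
  - change (Nat.iter (S n) (G a b) y k) with (G a b (Nat.iter n (G a b) y) k).
    unfold G at 1. rewrite !IHn.
    rewrite (pascal_sum (fun l => y (k + Z.of_nat (S n) * a + Z.of_nat l * (b - a))%Z)).
    rewrite (lsum_ext_lt (fun l => C n l * y (k + a + Z.of_nat n * a + Z.of_nat l * (b - a))%Z)
       (fun l => C n l * y (k + Z.of_nat (S n) * a + Z.of_nat l * (b - a))%Z)).
    2:{ intros; f_equal; f_equal; rewrite ?Nat2Z.inj_succ; ring. }
    rewrite (lsum_ext_lt (fun l => C n l * y (k + b + Z.of_nat n * a + Z.of_nat l * (b - a))%Z)
       (fun l => C n l * y (k + Z.of_nat (S n) * a + Z.of_nat (S l) * (b - a))%Z)).
    2:{ intros; f_equal; f_equal; rewrite ?Nat2Z.inj_succ; ring. }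
    simpl pow. field. apply pow_nonzero; lra.
Qed.

Lemma G_lin a b : linop (G a b).
Proof. intros c d f g. apply functional_extensionality; intros k; unfold G; ring. Qed.
Lemma G_contr a b : contr (G a b).
Proof. intros y B H k. unfold G. specialize (H (k+a)%Z) as H1. specialize (H (k+b)%Z) as H2.
  rewrite Rabs_mult, Rabs_inv, Rabs_right by lra.
  assert (Rabs (y (k + a)%Z + y (k + b)%Z) <= 2 * B) by (eapply Rle_trans; [apply Rabs_triang|lra]).
  replace (Rabs 2) with 2 by (rewrite Rabs_right; lra). lra. Qed.

Definition Tr := G (-1) 1.
Definition Lr := G 0 (-1).
Definition Wr (y : rs) : rs := fun k => / 4 * (y (k + -1)%Z + 2 * y k + y (k + 1)%Z).
Definition Ar (y : rs) : rs := fun k => Tr y k - y k.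
Definition Wpow n y := Nat.iter n Wr y.
Definition Tpow n y := Nat.iter n Tr y.
Definition Arpow n y := Nat.iter n Ar y.

Lemma Wr_lin : linop Wr.
Proof. intros c d f g. apply functional_extensionality; intros k; unfold Wr; ring. Qed.
Lemma Ar_lin : linop Ar.
Proof. intros c d f g. apply functional_extensionality; intros k; unfold Ar, Tr, G; ring. Qed.
Lemma Tr_lin : linop Tr. Proof. apply G_lin. Qed.

Lemma Ar_W y : Ar y = fun k => 2 * Wr y k + (-2) * y k.
Proof. apply functional_extensionality; intros k; unfold Ar, Tr, G, Wr. field. Qed.

Lemma Wr_L y k : Wr y k = Lr (Lr y) (k + 1)%Z.
Proof. unfold Wr, Lr, G.
  replace (k + 1 + 0 + 0)%Z with (k+1)%Z by lia.
  replace (k + 1 + 0 + -1)%Z with k by lia.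
  replace (k + 1 + -1 + 0)%Z with k by lia.
  replace (k + 1 + -1 + -1)%Z with (k + -1)%Z by lia. field. Qed.

Lemma L_shift n y d : Nat.iter n Lr (fun k => y (k + d)%Z) = fun k => Nat.iter n Lr y (k + d)%Z.
Proof. apply functional_extensionality; intros k. unfold Lr. rewrite !G_iter.
  f_equal. apply lsum_ext_lt; intros; do 2 f_equal; lia. Qed.

Lemma Wpow_L j y : Wpow j y = fun k => Nat.iter (2 * j) Lr y (k + Z.of_nat j)%Z.
Proof.
  induction j.
  - apply functional_extensionality; intros k. simpl. f_equal; lia.
  - apply functional_extensionality; intros k.
    change (Wpow (S j) y k) with (Wr (Wpow j y) k). rewrite Wr_L, IHj.
    change (Lr (Lr (fun k0 => Nat.iter (2*j) Lr y (k0 + Z.of_nat j)%Z)) (k+1)%Z) with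
      (Nat.iter 2 Lr (fun k0 => Nat.iter (2*j) Lr y (k0 + Z.of_nat j)%Z) (k+1)%Z).
    rewrite L_shift, <- Nat.iter_add. replace (2 + 2*j)%nat with (2 * S j)%nat by lia. f_equal; lia.
Qed.

Lemma Wpow_formula j y k : Wpow j y k =
  lsum (fun l => C (2 * j) l / 2 ^ (2 * j) * y (k + Z.of_nat j - Z.of_nat l)%Z) (S (2 * j)).
Proof. rewrite Wpow_L. unfold Lr. rewrite G_iter. rewrite <- lsum_scal.
  apply lsum_ext_lt; intros i Hi.
  replace (k + Z.of_nat j + Z.of_nat (2 * j) * 0 + Z.of_nat i * (-1 - 0))%Z with (k + Z.of_nat j - Z.of_nat i)%Z by lia.
  field. apply pow_nonzero; lra. Qed.

Lemma C_id n m : (m <= n)%nat ->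
  C (S (S n)) (S m) * INR (S m) * INR (S (n - m)) = INR (S (S n)) * INR (S n) * C n m.
Proof.
  intros Hm. unfold C. replace (S (S n) - S m)%nat with (S (n - m)) by lia.
  change (Factorial.fact (S (S n))) with (S (S n) * (S n * Factorial.fact n))%nat.
  change (Factorial.fact (S m)) with (S m * Factorial.fact m)%nat.
  change (Factorial.fact (S (n - m))) with (S (n - m) * Factorial.fact (n - m))%nat.
  rewrite !mult_INR. field.
  repeat split; try apply INR_fact_neq_0; apply not_0_INR; lia.
Qed.

Definition wco (n l : nat) : R := match l with O => 0 | S m => if Nat.leb m n then C n m / 2 ^ n else 0 end.

Lemma wco_shift n z : lsum (fun l => wco n l * z l) (S (S (S n))) =
  lsum (fun i => C n i / 2 ^ n * z (S i)) (S n).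
Proof.
  rewrite lsum_shift. simpl (wco n 0). 
  change (lsum (fun i => wco n (S i) * z (S i)) (S (S n))) with
   (lsum (fun i => wco n (S i) * z (S i)) (S n) + wco n (S (S n)) * z (S (S n))).
  replace (wco n (S (S n))) with 0.
  2:{ unfold wco; cbv beta iota. replace (Nat.leb (S n) n) with false; auto. symmetry; apply Nat.leb_gt; lia. }
  rewrite (lsum_ext_lt (fun i => wco n (S i) * z (S i)) (fun i => C n i / 2 ^ n * z (S i))). ring.
  intros i Hi. unfold wco; cbv beta iota. replace (Nat.leb i n) with true; auto. symmetry; apply Nat.leb_le; lia.
Qed.

Lemma wco_nonneg n l : 0 <= wco n l.
Proof. destruct l; simpl. lra. destruct (Nat.leb l n). apply Rle_mult_inv_pos. apply C_nonneg.
  apply pow_lt; lra. lra. Qed.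

Lemma wco_point n l : wco n l - C (S (S n)) l / 2 ^ (S (S n)) <= wco n l / INR (S (S n)).
Proof.
  assert (HC := C_nonneg (S (S n)) l).
  assert (Hp : 0 < 2 ^ n) by (apply pow_lt; lra).
  assert (HN : 0 < INR (S (S n))) by (apply lt_0_INR; lia).
  destruct l as [|m].
  - simpl. assert (0 <= C (S (S n)) 0 / (2 * (2 * 2 ^ n))) by (apply Rle_mult_inv_pos; nra).
    unfold Rdiv; rewrite Rmult_0_l. lra.
  - simpl wco. destruct (Nat.leb m n) eqn:E.
    + apply Nat.leb_le in E. assert (Hid := C_id n m E).
      set (w := C n m / 2 ^ n). set (v := C (S (S n)) (S m) / 2 ^ (S (S n))).
      assert (Hw : 0 <= w) by (apply Rle_mult_inv_pos; [apply C_nonneg|lra]).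
      assert (Hv : 0 <= v) by (apply Rle_mult_inv_pos; [apply C_nonneg|apply pow_lt; lra]).
      set (a := INR (S m)). set (b := INR (S (n - m))).
      assert (Hab : a + b = INR (S (S n))).
      { unfold a, b. rewrite <- plus_INR. f_equal. lia. }
      assert (Hn1 : INR (S (S n)) = INR (S n) + 1) by (rewrite S_INR; ring).
      assert (Hrel : 4 * v * a * b = INR (S (S n)) * INR (S n) * w).
      { unfold v, w. replace (4 * (C (S (S n)) (S m) / 2 ^ S (S n)) * a * b) with
          ((C (S (S n)) (S m) * a * b) / 2 ^ n) by (simpl pow; field; lra).
        unfold a, b. rewrite Hid. field. lra. }
      assert (Ha : 0 < a) by (apply lt_0_INR; lia).
      assert (Hb : 0 < b) by (apply lt_0_INR; lia).
      assert (H4 : 4 * a * b <= INR (S (S n)) * INR (S (S n))).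
      { rewrite <- Hab. assert (0 <= (a-b)*(a-b)) by apply Rle_0_sqr. nra. }
      assert (Hk : v * INR (S (S n)) >= w * INR (S n)).
      { assert (v * INR (S (S n)) * (INR (S (S n)) * INR (S (S n))) >=
                w * INR (S n) * (INR (S (S n)) * INR (S (S n)))).
        { assert (v * INR (S (S n)) * (4 * a * b) <= v * INR (S (S n)) * (INR (S (S n)) * INR (S (S n)))).
          { apply Rmult_le_compat_l; nra. }
          nra. }
        nra. }
      apply (Rmult_le_reg_r (INR (S (S n)))); auto. unfold Rdiv.
      rewrite Rmult_assoc, Rinv_l by lra. nra.
    + assert (0 <= C (S (S n)) (S m) / 2 ^ S (S n)) by (apply Rle_mult_inv_pos; [auto|apply pow_lt; lra]).
      unfold Rdiv at 2. rewrite Rmult_0_l. lra.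
Qed.

Lemma Ritt j y B : bnd y B -> forall k,
  Rabs (Wpow (S j) y k - Wpow j y k) <= B / INR (S j).
Proof.
  intros Hy k. set (n := (2 * j)%nat).
  set (z := fun l : nat => y (k + Z.of_nat j + 1 - Z.of_nat l)%Z).
  assert (E1 : Wpow (S j) y k = lsum (fun l => C (S (S n)) l / 2 ^ (S (S n)) * z l) (S (S (S n)))).
  { rewrite Wpow_formula. replace (2 * S j)%nat with (S (S n)) by (unfold n; lia).
    apply lsum_ext_lt; intros. unfold z. do 2 f_equal. lia. }
  assert (E2 : Wpow j y k = lsum (fun l => wco n l * z l) (S (S (S n)))).
  { rewrite wco_shift, Wpow_formula. fold n. apply lsum_ext_lt; intros. unfold z. do 2 f_equal. lia. }
  rewrite E1, E2, <- lsum_minus.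
  set (e := fun l => wco n l - C (S (S n)) l / 2 ^ (S (S n))).
  assert (B0 : 0 <= B) by (specialize (Hy k); pose proof (Rabs_pos (y k)); lra).
  assert (Hsum : lsum (fun l => Rabs (e l)) (S (S (S n))) <= / INR (S j)).
  { assert (Hw : lsum (fun l => wco n l) (S (S (S n))) = 1).
    { transitivity (lsum (fun l => wco n l * (fun _ : nat => 1) l) (S (S (S n)))).
      { apply lsum_ext_lt; intros; ring. }
      rewrite wco_shift. transitivity (lsum (fun i => / 2 ^ n * C n i) (S n)).
      { apply lsum_ext_lt; intros; unfold Rdiv; ring. }
      rewrite lsum_scal, binom_sum. field. apply pow_nonzero; lra. }
    assert (Hv : lsum (fun l => C (S (S n)) l / 2 ^ (S (S n))) (S (S (S n))) = 1).
    { transitivity (lsum (fun i => / 2 ^ (S (S n)) * C (S (S n)) i) (S (S (S n)))).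
      { apply lsum_ext_lt; intros; unfold Rdiv; ring. }
      rewrite lsum_scal, binom_sum. field. apply pow_nonzero; lra. }
    assert (He : lsum e (S (S (S n))) = 0). { unfold e. rewrite lsum_minus.
      change (lsum (fun l => wco n l) (S (S (S n))) - lsum (fun l => C (S (S n)) l / 2 ^ S (S n)) (S (S (S n))) = 0).
      rewrite Hw, Hv; ring. }
    rewrite (lsum_ext_lt (fun l => Rabs (e l)) (fun l => 2 * Rmax (e l) 0 - e l)).
    2:{ intros. unfold Rmax. destruct (Rle_dec (e i) 0). rewrite Rabs_left1; lra.
        rewrite Rabs_right; lra. }
    rewrite lsum_minus, He, lsum_scal.
    assert (lsum (fun l => Rmax (e l) 0) (S (S (S n))) <= lsum (fun l => wco n l / INR (S (S n))) (S (S (S n)))).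
    { apply lsum_le. intros. apply Rmax_lub. apply wco_point. apply Rle_mult_inv_pos. apply wco_nonneg.
      apply lt_0_INR; lia. }
    rewrite (lsum_ext_lt (fun l => wco n l / INR (S (S n))) (fun l => / INR (S (S n)) * wco n l)) in H
      by (intros; unfold Rdiv; ring).
    rewrite lsum_scal in H. assert (Hw' : lsum (wco n) (S (S (S n))) = 1) by exact Hw.
    rewrite ?Hw, ?Hw' in H.
    replace (INR (S (S n))) with (2 * INR (S j)) in H.
    2:{ unfold n. rewrite !S_INR, mult_INR, S_INR. simpl. ring. }
    assert (0 < INR (S j)) by (apply lt_0_INR; lia).
    rewrite Rinv_mult in H. lra. }
  eapply Rle_trans. apply lsum_abs.
  eapply Rle_trans. apply (lsum_le _ (fun l => B * Rabs (e l))).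
  { intros. replace (C (S (S n)) i / 2 ^ S (S n) * z i - wco n i * z i) with (-(e i) * z i) by (unfold e; ring).
    rewrite Rabs_mult, Rabs_Ropp, (Rmult_comm B). apply Rmult_le_compat_l. apply Rabs_pos. apply Hy. }
  rewrite lsum_scal. unfold Rdiv. apply Rmult_le_compat_l; auto.
Qed.

Lemma Arpow_formula n y : Arpow n y = fun k =>
  lsum (fun j => C n j * (2 ^ j * (-2) ^ (n - j) * Wpow j y k)) (S n).
Proof.
  induction n.
  - apply functional_extensionality; intros k. simpl. rewrite Cn0. ring.
  - change (Arpow (S n) y) with (Ar (Arpow n y)). rewrite Ar_W, IHn.
    apply functional_extensionality; intros k.
    rewrite (linop_lsum Wr (fun j k => C n j * (2 ^ j * (-2) ^ (n - j) * Wpow j y k))) by apply Wr_lin.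
    rewrite (pascal_sum (fun l => 2 ^ l * (-2) ^ (S n - l) * Wpow l y k)).
    rewrite (lsum_ext_lt (fun j => Wr (fun k0 => C n j * (2 ^ j * (-2) ^ (n - j) * Wpow j y k0)) k)
      (fun l => C n l * (2 ^ S l * (-2) ^ (S n - S l) * Wpow (S l) y k) / 2)).
    2:{ intros i Hi.
        replace (fun k0 => C n i * (2 ^ i * (-2) ^ (n - i) * Wpow i y k0)) with
          (fun k0 => (C n i * (2 ^ i * (-2) ^ (n - i))) * Wpow i y k0)
          by (apply functional_extensionality; intros; ring).
        rewrite (linop_scal Wr (C n i * (2 ^ i * (-2) ^ (n - i)))
          (fun k0 => Wpow i y k0)) by apply Wr_lin.
        simpl (S n - S i)%nat. change (Wpow (S i) y k) with (Wr (Wpow i y) k).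
        replace (fun k0 => Wpow i y k0) with (Wpow i y) by reflexivity. simpl pow. field. }
    rewrite (lsum_ext_lt (fun l => C n l * (2 ^ l * (-2) ^ (S n - l) * Wpow l y k))
      (fun j => (-2) * (C n j * (2 ^ j * (-2) ^ (n - j) * Wpow j y k)))).
    2:{ intros i Hi. replace (S n - i)%nat with (S (n - i)) by lia. simpl pow. ring. }
    rewrite lsum_scal. unfold Rdiv.
    rewrite (lsum_ext_lt (fun l => C n l * (2 ^ S l * (-2) ^ (S n - S l) * Wpow (S l) y k) * / 2)
      (fun l => / 2 * (C n l * (2 ^ S l * (-2) ^ (S n - S l) * Wpow (S l) y k)))) by (intros; ring).
    rewrite lsum_scal. field.
Qed.


Definition ec (s : R) (j : nat) : R := s ^ j / INR (fact j).
Definition pc (s : R) (j : nat) : R := exp (- s) * ec s j.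

Lemma ec_series s : is_series (ec s) (exp s).
Proof. generalize (is_exp_Reals s). unfold is_pseries. apply is_series_ext.
  intros n. unfold ec. rewrite pow_n_pow. unfold scal; simpl. unfold mult; simpl. unfold Rdiv; ring. Qed.

Lemma is_series_scal_r' (a : nat -> R) l c : is_series a l -> is_series (fun j => a j * c) (l * c).
Proof. intros H. pose proof (is_series_scal_l c a l H) as H2.
  replace (l * c) with (scal c l) by (unfold scal; simpl; unfold mult; simpl; ring).
  revert H2. apply is_series_ext. intros; unfold scal; simpl; unfold mult; simpl; ring. Qed.


Lemma is_series_scal_l' (a : nat -> R) l c : is_series a l -> is_series (fun j => c * a j) (c * l).
Proof. intros H. pose proof (is_series_scal_r' a l c H) as H2. replace (c * l) with (l * c) by ring.
  revert H2. apply is_series_ext. intros; apply Rmult_comm. Qed.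
Lemma is_series_plus' (a b : nat -> R) la lb : is_series a la -> is_series b lb ->
  is_series (fun j => a j + b j) (la + lb).
Proof. intros Ha Hb. pose proof (is_series_plus a b la lb Ha Hb) as H2. exact H2. Qed.
Lemma ex_scal (a : nat -> R) c : ex_series a -> ex_series (fun j => c * a j).
Proof. intros [l H]. exists (c * l). apply is_series_scal_l'; auto. Qed.
Lemma ex_plus (a b : nat -> R) : ex_series a -> ex_series b -> ex_series (fun j => a j + b j).
Proof. intros [l H] [l' H']. exists (l + l'). apply is_series_plus'; auto. Qed.

Lemma pc_series s : is_series (pc s) 1.
Proof. replace 1 with (exp s * exp (- s)).
  pose proof (is_series_scal_r' _ _ (exp (-s)) (ec_series s)) as H2. revert H2.
  apply is_series_ext. intros n. unfold pc. apply Rmult_comm.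
  rewrite <- exp_plus. replace (s + -s) with 0 by ring. apply exp_0. Qed.

Lemma ec_nonneg s j : 0 <= s -> 0 <= ec s j.
Proof. intros. unfold ec. apply Rle_mult_inv_pos. apply pow_le; auto. apply INR_fact_lt_0. Qed.
Lemma pc_nonneg s j : 0 <= s -> 0 <= pc s j.
Proof. intros. unfold pc. apply Rmult_le_pos. left; apply exp_pos. apply ec_nonneg; auto. Qed.

Lemma series_dom (f g : nat -> R) l : (forall j, Rabs (f j) <= g j) -> is_series g l ->
  ex_series f /\ Rabs (Series f) <= l.
Proof.
  intros H Hg. assert (Eg : ex_series g) by (exists l; auto).
  assert (Ef : ex_series f) by (apply (ex_series_le f g); auto).
  assert (Ea : ex_series (fun j => Rabs (f j))).
  { apply (@ex_series_le R_AbsRing R_CompleteNormedModule (fun j => Rabs (f j)) g); auto. intros n. change (Rabs (Rabs (f n)) <= g n). rewrite Rabs_Rabsolu; auto. }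
  split; auto. eapply Rle_trans. apply Series_Rabs; auto.
  rewrite <- (is_series_unique g l Hg). apply Series_le; auto. intros; split; auto; apply Rabs_pos.
Qed.

Definition U (t : R) (y : rs) : rs := fun k => Series (fun j => pc (2 * t) j * Wpow j y k).

Lemma Wpow_contr j : contr (Wpow j).
Proof. unfold Wpow. apply contr_iter. intros y B H k. unfold Wr.
  pose proof (H (k + -1)%Z). pose proof (H k). pose proof (H (k+1)%Z).
  rewrite Rabs_mult, Rabs_right by lra.
  assert (Rabs (y (k + -1)%Z + 2 * y k + y (k + 1)%Z) <= 4 * B).
  { eapply Rle_trans. apply Rabs_triang. eapply Rle_trans. apply Rplus_le_compat_r. apply Rabs_triang.
    rewrite Rabs_mult, (Rabs_right 2) by lra. lra. }
  lra. Qed.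

Lemma bnd_nonneg y B : bnd y B -> 0 <= B.
Proof. intros H. specialize (H 0%Z). pose proof (Rabs_pos (y 0%Z)). lra. Qed.

Lemma U_terms t y B k : 0 <= t -> bnd y B ->
  forall j, Rabs (pc (2 * t) j * Wpow j y k) <= pc (2 * t) j * B.
Proof. intros Ht Hy j. rewrite Rabs_mult, Rabs_right. apply Rmult_le_compat_l.
  apply pc_nonneg; lra. apply Wpow_contr; auto. apply Rle_ge, pc_nonneg; lra. Qed.

Lemma U_ex t y B k : 0 <= t -> bnd y B -> ex_series (fun j => pc (2 * t) j * Wpow j y k).
Proof. intros Ht Hy. eapply proj1. eapply series_dom. apply (U_terms t y B k); auto.
  apply is_series_scal_r', pc_series. Qed.

Lemma U_bnd t y B : 0 <= t -> bnd y B -> bnd (U t y) B.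
Proof. intros Ht Hy k. unfold U. replace B with (1 * B) by ring. eapply proj2. eapply series_dom.
  apply (U_terms t y B k); auto. apply is_series_scal_r', pc_series. Qed.

Lemma Wpow_lin j : linop (Wpow j).
Proof. apply linop_iter, Wr_lin. Qed.

Lemma U_lin t f g Bf Bg a b : 0 <= t -> bnd f Bf -> bnd g Bg ->
  U t (fun k => a * f k + b * g k) = fun k => a * U t f k + b * U t g k.
Proof.
  intros Ht Hf Hg. apply functional_extensionality; intros k. unfold U.
  rewrite <- !Series_scal_l, <- Series_plus.
  apply Series_ext; intros j. rewrite (Wpow_lin j a b f g). ring.
  apply ex_scal. eapply U_ex; eauto.
  apply ex_scal. eapply U_ex; eauto.
Qed.

Lemma Wpow_const j c : Wpow j (fun _ => c) = fun _ => c.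
Proof. induction j; auto. change (Wpow (S j) (fun _ => c)) with (Wr (Wpow j (fun _ => c))).
  rewrite IHj. apply functional_extensionality; intros; unfold Wr; field. Qed.

Lemma U_const t c k : U t (fun _ => c) k = c.
Proof. unfold U. rewrite (Series_ext _ (fun j => pc (2*t) j * c)) by (intros; rewrite Wpow_const; reflexivity).
  rewrite Series_scal_r.
  rewrite (is_series_unique _ _ (pc_series _)). ring. Qed.

Lemma Series_comb (a b c : nat -> R) : ex_series a -> ex_series b -> ex_series c ->
  Series (fun j => / 2 * (a j + b j) - c j) = / 2 * (Series a + Series b) - Series c.
Proof. intros Ha Hb Hc. rewrite Series_minus, Series_scal_l, Series_plus; auto.
  apply ex_scal, ex_plus; auto. Qed.

Lemma Ar_series (F : nat -> rs) k : (forall k, ex_series (fun j => F j k)) ->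
  Ar (fun k => Series (fun j => F j k)) k = Series (fun j => Ar (F j) k).
Proof. intros H. unfold Ar, Tr, G. rewrite Series_comb; auto. Qed.

Lemma pcq_series s : 0 < s -> is_series (fun j => pc s j / INR (S j)) (exp (- s) / s * (exp s - 1)).
Proof.
  intros Hs.
  assert (H1 : is_series (fun j => ec s (S j)) (exp s - 1)).
  { apply is_series_incr_1. match goal with |- is_series _ ?X => replace X with (exp s) end.
    apply ec_series. unfold ec, plus; simpl. field. }
  pose proof (is_series_scal_l' _ _ (exp (-s) / s) H1) as H2. revert H2.
  apply is_series_ext.
  { intros n. cut (exp (- s) / s * ec s (S n) = pc s n / INR (S n)). auto. unfold pc, ec.
    change (fact (S n)) with (S n * fact n)%nat. rewrite mult_INR. simpl pow.
    field. split. apply INR_fact_neq_0. split. apply not_0_INR; lia. lra. }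
Qed.

Lemma pcq_bound s : 0 < s -> exp (- s) / s * (exp s - 1) <= / s.
Proof. intros Hs. assert (0 < exp (-s)) by apply exp_pos.
  replace (exp (- s) / s * (exp s - 1)) with ((exp (-s) * exp s - exp (-s)) / s) by (field; lra).
  rewrite <- exp_plus. replace (-s + s) with 0 by ring. rewrite exp_0.
  unfold Rdiv. assert (0 < / s) by (apply Rinv_0_lt_compat; auto). nra. Qed.

Lemma Wpow_Ar j y : Wpow j (Ar y) = fun k => 2 * Wpow (S j) y k + (-2) * Wpow j y k.
Proof. rewrite Ar_W. rewrite (Wpow_lin j 2 (-2) (Wr y) y). unfold Wpow.
  rewrite <- Nat.iter_succ_r. reflexivity. Qed.

Lemma diff_series_bound t y B k : 0 < t -> bnd y B ->
  Rabs (Series (fun j => pc (2 * t) j * (2 * (Wpow (S j) y k - Wpow j y k)))) <= B / t.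
Proof.
  intros Ht Hy. assert (Hs : 0 < 2 * t) by lra.
  assert (HB := bnd_nonneg y B Hy).
  assert (Hterms : forall j, Rabs (pc (2 * t) j * (2 * (Wpow (S j) y k - Wpow j y k))) <=
      pc (2 * t) j / INR (S j) * (2 * B)).
  { intros j. rewrite Rabs_mult, Rabs_right by (apply Rle_ge, pc_nonneg; lra).
    rewrite Rabs_mult, (Rabs_right 2) by lra.
    assert (H := Ritt j y B Hy k). unfold Rdiv in *.
    assert (0 <= pc (2 * t) j) by (apply pc_nonneg; lra).
    replace (pc (2 * t) j * / INR (S j) * (2 * B)) with (pc (2 * t) j * (2 * (B * / INR (S j)))) by ring.
    apply Rmult_le_compat_l; auto. lra. }
  eapply Rle_trans. apply (proj2 (series_dom _ _ _ Hterms (is_series_scal_r' _ _ (2 * B) (pcq_series _ Hs)))).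
  assert (H := pcq_bound (2 * t) Hs).
  replace (B / t) with (/ (2 * t) * (2 * B)) by (field; lra).
  apply Rmult_le_compat_r; lra.
Qed.

Lemma U_Ar t y B k : 0 < t -> bnd y B -> Rabs (U t (Ar y) k) <= B / t.
Proof. intros Ht Hy. unfold U.
  rewrite (Series_ext _ (fun j => pc (2*t) j * (2 * (Wpow (S j) y k - Wpow j y k)))).
  apply (diff_series_bound t y B k); auto.
  intros j; rewrite Wpow_Ar; ring. Qed.

Lemma Ar_U t y B k : 0 < t -> bnd y B -> Rabs (Ar (U t y) k) <= B / t.
Proof. intros Ht Hy. unfold U. rewrite Ar_series.
  2:{ intros; eapply U_ex; eauto; lra. }
  rewrite (Series_ext _ (fun j => pc (2*t) j * (2 * (Wpow (S j) y k - Wpow j y k)))).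
  apply (diff_series_bound t y B k); auto.
  intros j.
  rewrite (linop_scal Ar (pc (2*t) j) (Wpow j y)) by apply Ar_lin. rewrite Ar_W. simpl. ring.
Qed.

Definition wser (t : R) (y : rs) : rs := fun k =>
  Series (fun j => pc (2 * t) j * (/ 2 * lsum (fun i => Wpow i y k) j)).

Lemma jpc_series s : is_series (fun j => pc s j * INR j) s.
Proof.
  apply is_series_decr_1. match goal with |- is_series _ ?X => replace X with (s * 1) end.
  2:{ simpl; unfold plus, opp; simpl; ring. }
  pose proof (is_series_scal_l' _ _ s (pc_series s)) as H2. revert H2.
  apply is_series_ext.
  { intros n. cut (s * pc s n = pc s (S n) * INR (S n)). auto. unfold pc, ec.
    change (fact (S n)) with (S n * fact n)%nat. rewrite mult_INR. simpl pow.
    field. split. apply INR_fact_neq_0. apply not_0_INR; lia. }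
Qed.

Lemma wser_terms t y B k : 0 <= t -> bnd y B -> forall j,
  Rabs (pc (2 * t) j * (/ 2 * lsum (fun i => Wpow i y k) j)) <= pc (2 * t) j * INR j * (B / 2).
Proof. intros Ht Hy j. rewrite Rabs_mult, Rabs_right by (apply Rle_ge, pc_nonneg; lra).
  rewrite Rmult_assoc. apply Rmult_le_compat_l. apply pc_nonneg; lra.
  rewrite Rabs_mult, Rabs_right by lra.
  assert (Rabs (lsum (fun i => Wpow i y k) j) <= INR j * B).
  { apply lsum_bound. intros; apply Wpow_contr; auto. }
  lra. Qed.

Lemma wser_bnd t y B : 0 <= t -> bnd y B -> bnd (wser t y) (t * B).
Proof. intros Ht Hy k. unfold wser. replace (t * B) with (2 * t * (B / 2)) by field.
  eapply proj2. eapply series_dom. apply (wser_terms t y B k); auto.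
  apply is_series_scal_r', jpc_series. Qed.

Lemma wser_Ar t y B k : 0 <= t -> bnd y B -> Ar (wser t y) k = U t y k - y k.
Proof.
  intros Ht Hy. unfold wser. rewrite Ar_series.
  2:{ intros k'. eapply proj1. eapply series_dom. apply (wser_terms t y B k'); auto.
      apply is_series_scal_r', jpc_series. }
  rewrite <- (U_const t (y k) k). unfold U.
  rewrite (Series_ext (fun j => pc (2*t) j * Wpow j (fun _ => y k) k) (fun j => pc (2*t) j * y k))
    by (intros; rewrite Wpow_const; reflexivity).
  rewrite <- Series_minus.
  2:{ eapply U_ex; eauto. }
  2:{ apply (ex_series_ext (fun n => y k * pc (2 * t) n)). intros; apply Rmult_comm.
      apply ex_scal. exists 1; apply pc_series. }
  apply Series_ext; intros j.
  rewrite (linop_scal Ar (pc (2 * t) j) (fun k0 => / 2 * lsum (fun i => Wpow i y k0) j)) by apply Ar_lin.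
  rewrite (linop_scal Ar (/ 2) (fun k0 => lsum (fun i => Wpow i y k0) j)) by apply Ar_lin.
  rewrite (linop_lsum Ar (fun i => Wpow i y)) by apply Ar_lin.
  rewrite (lsum_ext_lt (fun i => Ar (Wpow i y) k) (fun i => 2 * (Wpow (S i) y k - Wpow i y k))).
  2:{ intros. rewrite Ar_W. simpl. ring. }
  rewrite lsum_scal. rewrite (lsum_telesc (fun i => Wpow i y k)). simpl. field.
Qed.


Lemma lsum_split g m n : lsum g (m + n) = lsum g m + lsum (fun i => g (m + i)%nat) n.
Proof. induction n. rewrite Nat.add_0_r; simpl; ring.
  rewrite Nat.add_succ_r. simpl. rewrite IHn. ring. Qed.

Lemma frac_le1 B : 0 <= B -> B / (B + 1) <= 1.
Proof. intros H. apply Rmult_le_reg_r with (B + 1). lra. unfold Rdiv.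
  rewrite Rmult_assoc, Rinv_l by lra. lra. Qed.

Lemma series_explicit (a : nat -> R) l : is_series a l ->
  forall eps, 0 < eps -> exists N, forall n, (N <= n)%nat -> Rabs (lsum a (S n) - l) < eps.
Proof. intros H eps He. apply is_series_Reals in H. destruct (H eps) as [N HN]; [lra|].
  exists N; intros n Hn. rewrite lsum_sum_f. apply HN; lia. Qed.

Lemma conv0 (a d : nat -> R) la : (forall j, 0 <= a j) -> is_series a la ->
  (forall eps, 0 < eps -> exists M, forall m, (M <= m)%nat -> Rabs (d m) < eps) ->
  forall eps, 0 < eps -> exists N0, forall N, (N0 <= N)%nat ->
  lsum (fun j => a j * Rabs (d (N - j)%nat)) (S N) <= eps.
Proof.
  intros Ha Hs Hd eps He.
  destruct (Hd 1) as [M1 HM1]; [lra|].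
  set (D := 1 + lsum (fun m => Rabs (d m)) M1).
  assert (HD : forall m, Rabs (d m) <= D).
  { intros m. destruct (le_lt_dec M1 m). specialize (HM1 m l).
    assert (0 <= lsum (fun m => Rabs (d m)) M1) by (apply lsum_nonneg; intros; apply Rabs_pos).
    unfold D; lra.
    unfold D. replace M1 with (S m + (M1 - S m))%nat by lia. rewrite lsum_split. simpl.
    assert (0 <= lsum (fun m => Rabs (d m)) m) by (apply lsum_nonneg; intros; apply Rabs_pos).
    assert (0 <= lsum (fun i => Rabs (d (S (m + i)))) (M1 - S m)) by (apply lsum_nonneg; intros; apply Rabs_pos).
    lra. }
  assert (HD0 : 0 < D).
  { unfold D. assert (0 <= lsum (fun m => Rabs (d m)) M1) by (apply lsum_nonneg; intros; apply Rabs_pos). lra. }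
  set (eta := Rmin 1 (eps / (4 * D))).
  assert (Heta : 0 < eta) by (unfold eta; apply Rmin_pos; [lra|apply Rdiv_lt_0_compat; lra]).
  assert (Heta1 : eta <= 1) by apply Rmin_l.
  assert (Heta2 : eta <= eps / (4 * D)) by apply Rmin_r.
  destruct (series_explicit a la Hs eta Heta) as [N1 HN1].
  set (e2 := eps / (2 * (Rabs la + 1))).
  assert (HL := Rabs_pos la).
  assert (He2 : 0 < e2) by (unfold e2; apply Rdiv_lt_0_compat; lra).
  destruct (Hd e2 He2) as [M HM].
  exists (N1 + M + 1)%nat. intros N HN.
  replace (S N) with (S N1 + (N - N1))%nat by lia. rewrite lsum_split.
  assert (P1 : lsum (fun j => a j * Rabs (d (N - j)%nat)) (S N1) <= e2 * (Rabs la + 1)).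
  { eapply Rle_trans. apply (lsum_le _ (fun j => e2 * a j)).
    { intros i Hi. rewrite Rmult_comm. apply Rmult_le_compat_r; auto. left; apply HM; lia. }
    rewrite lsum_scal. apply Rmult_le_compat_l; [lra|].
    specialize (HN1 N1 (le_n _)). apply Rabs_def2 in HN1. pose proof (Rle_abs la). lra. }
  assert (P2 : lsum (fun i => a (S N1 + i)%nat * Rabs (d (N - (S N1 + i))%nat)) (N - N1) <= D * (2 * eta)).
  { eapply Rle_trans. apply (lsum_le _ (fun i => D * a (S N1 + i)%nat)).
    { intros i Hi. rewrite (Rmult_comm D). apply Rmult_le_compat_l; auto. }
    rewrite lsum_scal. apply Rmult_le_compat_l; [lra|].
    assert (E : lsum a (S N) = lsum a (S N1) + lsum (fun i => a (S N1 + i)%nat) (N - N1)).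
    { rewrite <- lsum_split. f_equal; lia. }
    pose proof (HN1 N1 (le_n _)) as A1. pose proof (HN1 N ltac:(lia)) as A2.
    apply Rabs_def2 in A1. apply Rabs_def2 in A2. lra. }
  assert (E1 : e2 * (Rabs la + 1) = eps / 2) by (unfold e2; field; lra).
  assert (E2 : D * (2 * eta) <= eps / 2).
  { assert (D * eta <= D * (eps / (4 * D))) by (apply Rmult_le_compat_l; lra).
    replace (D * (eps / (4 * D))) with (eps / 4) in H by (field; lra). lra. }
  lra.
Qed.

Lemma coef_id t n j : (j <= n)%nat ->
  t ^ n / INR (fact n) * (C n j * (2 ^ j * (-2) ^ (n - j))) = ec (2 * t) j * ec (- (2 * t)) (n - j).
Proof.
  intros H. replace n with (j + (n - j))%nat at 1 2 3 by lia. set (m := (n - j)%nat).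
  unfold C, ec. replace (j + m - j)%nat with m by lia.
  rewrite pow_add, !Rpow_mult_distr. replace (- (2 * t)) with ((-2) * t) by ring. rewrite Rpow_mult_distr.
  field. repeat split; apply INR_fact_neq_0.
Qed.

Lemma expartial_eq t y k N :
  lsum (fun n => t ^ n / INR (fact n) * Arpow n y k) (S N) =
  lsum (fun j => ec (2 * t) j * Wpow j y k * lsum (ec (- (2 * t))) (S (N - j))) (S N).
Proof.
  set (g := fun j m => ec (2 * t) j * Wpow j y k * ec (- (2 * t)) m).
  rewrite (lsum_ext_lt _ (fun n => lsum (fun j => g j (n - j)%nat) (S n))).
  2:{ intros n Hn. rewrite Arpow_formula. rewrite <- lsum_scal. apply lsum_ext_lt.
      intros j Hj. unfold g. transitivity (t ^ n / INR (fact n) * (C n j * (2 ^ j * (-2) ^ (n - j))) * Wpow j y k).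
      ring. rewrite coef_id by lia. ring. }
  rewrite lsum_tri. apply lsum_ext_lt; intros j Hj. unfold g. apply lsum_scal.
Qed.

Lemma tail_series s N : is_series (fun i => pc s (S N + i)%nat) (1 - lsum (pc s) (S N)).
Proof. apply is_series_incr_n. lia. simpl Init.Nat.pred.
  match goal with |- is_series _ ?X => replace X with 1 end. apply pc_series.
  rewrite sum_n_Reals, <- lsum_sum_f. unfold plus; simpl. ring. Qed.

Lemma exp_conv t y B : 0 <= t -> bnd y B -> forall eps, 0 < eps -> exists N0, forall N, (N0 <= N)%nat ->
  forall k, Rabs (lsum (fun n => t ^ n / INR (fact n) * Arpow n y k) (S N) - U t y k) <= eps.
Proof.
  intros Ht Hy eps He. set (s := 2 * t). assert (Hs : 0 <= s) by (unfold s; lra).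
  assert (HB := bnd_nonneg y B Hy).
  set (d := fun m => lsum (ec (- s)) (S m) - exp (- s)).
  set (eps1 := eps / (2 * (B + 1))).
  assert (He1 : 0 < eps1) by (unfold eps1; apply Rdiv_lt_0_compat; lra).
  destruct (conv0 (ec s) d (exp s) (fun j => ec_nonneg s j Hs) (ec_series s)
     (series_explicit _ _ (ec_series (- s))) eps1 He1) as [Na Ha].
  destruct (series_explicit _ _ (pc_series s) eps1 He1) as [Nb Hb].
  exists (Na + Nb)%nat. intros N HN k.
  specialize (Ha N ltac:(lia)). specialize (Hb N ltac:(lia)).
  rewrite expartial_eq. fold s.
  assert (P1 : Rabs (lsum (fun j => ec s j * Wpow j y k * lsum (ec (- s)) (S (N - j))) (S N)
                - lsum (fun j => pc s j * Wpow j y k) (S N)) <= B * eps1).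
  { rewrite <- lsum_minus.
    rewrite (lsum_ext_lt _ (fun j => ec s j * Wpow j y k * d (N - j)%nat)).
    2:{ intros; unfold d, pc; ring. }
    eapply Rle_trans. apply lsum_abs.
    eapply Rle_trans. apply (lsum_le _ (fun j => B * (ec s j * Rabs (d (N - j)%nat)))).
    { intros i Hi. rewrite !Rabs_mult, (Rabs_right (ec s i)) by (apply Rle_ge, ec_nonneg; auto).
      assert (Rabs (Wpow i y k) <= B) by (apply Wpow_contr; auto).
      assert (0 <= ec s i) by (apply ec_nonneg; auto).
      assert (0 <= ec s i * Rabs (d (N - i)%nat)) by (apply Rmult_le_pos; auto; apply Rabs_pos). nra. }
    rewrite lsum_scal. apply Rmult_le_compat_l; auto. }
  assert (P2 : Rabs (lsum (fun j => pc s j * Wpow j y k) (S N) - U t y k) <= B * eps1).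
  { unfold U. fold s. rewrite (Series_incr_n _ (S N)); [| lia | apply (U_ex t y B k Ht Hy)].
    simpl Init.Nat.pred. rewrite <- lsum_sum_f.
    replace (lsum (fun j => pc s j * Wpow j y k) (S N) -
      (lsum (fun j => pc s j * Wpow j y k) (S N) + Series (fun k0 => pc s (S N + k0) * Wpow (S N + k0) y k)))
      with (- Series (fun k0 => pc s (S N + k0) * Wpow (S N + k0) y k)) by ring.
    rewrite Rabs_Ropp.
    assert (Ht2 : forall i, Rabs (pc s (S N + i) * Wpow (S N + i) y k) <= pc s (S N + i)%nat * B).
    { intros i. apply (U_terms t y B k Ht Hy). }
    eapply Rle_trans. apply (proj2 (series_dom _ _ _ Ht2 (is_series_scal_r' _ _ B (tail_series s N)))).
    apply Rabs_def2 in Hb. rewrite Rmult_comm. apply Rmult_le_compat_l; auto. lra. }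
  replace (lsum (fun j => ec s j * Wpow j y k * lsum (ec (- s)) (S (N - j))) (S N) - U t y k) with
    ((lsum (fun j => ec s j * Wpow j y k * lsum (ec (- s)) (S (N - j))) (S N)
                - lsum (fun j => pc s j * Wpow j y k) (S N)) +
     (lsum (fun j => pc s j * Wpow j y k) (S N) - U t y k)) by ring.
  eapply Rle_trans. apply Rabs_triang.
  assert (B * eps1 <= eps / 2).
  { unfold eps1. replace (B * (eps / (2 * (B + 1)))) with (eps / 2 * (B / (B + 1))) by (field; lra).
    assert (B / (B + 1) <= 1) by (apply frac_le1; lra).
    assert (eps / 2 * (B / (B + 1)) <= eps / 2 * 1) by (apply Rmult_le_compat_l; lra). lra. }
  lra.
Qed.


Definition Mr (n : nat) (z : rs) : rs := fun k => / INR n * lsum (fun j => Tpow (S j) z k) n.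

Lemma Tpow_lin j : linop (Tpow j). Proof. apply linop_iter, G_lin. Qed.
Lemma Tpow_contr j : contr (Tpow j). Proof. apply contr_iter, G_contr. Qed.
Lemma Tpow_const j c : Tpow j (fun _ => c) = fun _ => c.
Proof. induction j; auto. change (Tpow (S j) (fun _ => c)) with (Tr (Tpow j (fun _ => c))).
  rewrite IHj. apply functional_extensionality; intros; unfold Tr, G; field. Qed.

Lemma Mr_lin n : linop (Mr n).
Proof. intros a b f g. apply functional_extensionality; intros k. unfold Mr.
  rewrite (lsum_ext_lt _ (fun j => a * Tpow (S j) f k + b * Tpow (S j) g k)).
  2:{ intros. rewrite (Tpow_lin (S i) a b f g). reflexivity. }
  rewrite lsum_plus, !lsum_scal. ring. Qed.

Lemma Mr_const n c k : (1 <= n)%nat -> Mr n (fun _ => c) k = c.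
Proof. intros H. unfold Mr. rewrite (lsum_ext_lt _ (fun _ => c)).
  rewrite lsum_const. field. apply not_0_INR; lia.
  intros; rewrite Tpow_const; auto. Qed.

Lemma Mr_contr n g E : bnd g E -> bnd (Mr n g) E.
Proof. intros H k. unfold Mr. assert (HE := bnd_nonneg g E H).
  destruct n. simpl. rewrite Rmult_0_r, Rabs_R0; auto.
  rewrite Rabs_mult, Rabs_inv, Rabs_right by (apply Rle_ge, pos_INR).
  assert (Rabs (lsum (fun j => Tpow (S j) g k) (S n)) <= INR (S n) * E).
  { apply lsum_bound. intros; apply Tpow_contr; auto. }
  assert (0 < INR (S n)) by (apply lt_0_INR; lia).
  apply (Rmult_le_reg_l (INR (S n))); auto. rewrite <- Rmult_assoc, Rinv_r by lra. lra. Qed.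

Lemma Rabs_minus_le a b : Rabs (a - b) <= Rabs a + Rabs b.
Proof. unfold Rminus. eapply Rle_trans. apply Rabs_triang. rewrite Rabs_Ropp. lra. Qed.

Lemma bnd_shift y B c : bnd y B -> bnd (fun k => y k - c) (B + Rabs c).
Proof. intros H k. eapply Rle_trans. apply Rabs_minus_le. specialize (H k). lra. Qed.

Definition yN (N : nat) (z : rs) : rs := fun k => / INR N * lsum (fun j => lsum (fun i => Tpow i z k) (S j)) N.

Lemma yN_Ar N z k : (1 <= N)%nat -> Ar (yN N z) k = Mr N z k - z k.
Proof. intros HN. unfold yN.
  rewrite (linop_scal Ar (/ INR N) (fun k0 => lsum (fun j => lsum (fun i => Tpow i z k0) (S j)) N)) by apply Ar_lin.
  rewrite (linop_lsum Ar (fun j k0 => lsum (fun i => Tpow i z k0) (S j))) by apply Ar_lin.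
  rewrite (lsum_ext_lt _ (fun j => Tpow (S j) z k - z k)).
  2:{ intros j Hj. rewrite (linop_lsum Ar (fun i => Tpow i z)) by apply Ar_lin.
      rewrite (lsum_ext_lt _ (fun i => Tpow (S i) z k - Tpow i z k)).
      apply (lsum_telesc (fun i => Tpow i z k)). intros; reflexivity. }
  rewrite lsum_minus, lsum_const. unfold Mr. field. apply not_0_INR; lia. Qed.

Lemma decomp N z : (1 <= N)%nat -> z = fun k => 1 * Mr N z k + (-1) * Ar (yN N z) k.
Proof. intros HN. apply functional_extensionality; intros k. rewrite yN_Ar by auto. ring. Qed.

Lemma S_bound z Bz j k : bnd z Bz -> Rabs (lsum (fun i => Tpow i z k) (S j)) <= INR (S j) * Bz.
Proof. intros H. apply lsum_bound. intros; apply Tpow_contr; auto. Qed.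

Lemma yN_bnd N z C : (forall j k, (j < N)%nat -> Rabs (lsum (fun i => Tpow i z k) (S j)) <= C) ->
  0 <= C -> bnd (yN N z) C.
Proof. intros H HC k. unfold yN. destruct N. simpl. rewrite Rmult_0_r, Rabs_R0; auto.
  rewrite Rabs_mult, Rabs_inv, Rabs_right by (apply Rle_ge, pos_INR).
  assert (Rabs (lsum (fun j => lsum (fun i => Tpow i z k) (S j)) (S N)) <= INR (S N) * C).
  { apply lsum_bound. intros; apply H; auto. }
  assert (0 < INR (S N)) by (apply lt_0_INR; lia).
  apply (Rmult_le_reg_l (INR (S N))); auto. rewrite <- Rmult_assoc, Rinv_r by lra. lra. Qed.

Lemma Mr_shift n y c k : (1 <= n)%nat -> Mr n (fun k => y k - c) k = Mr n y k - c.
Proof. intros H. replace (fun k => y k - c) with (fun k => 1 * y k + (-1) * (fun _ => c) k)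
  by (apply functional_extensionality; intros; ring). rewrite Mr_lin. rewrite Mr_const; auto. ring. Qed.

Lemma U_shift t y B c k : 0 <= t -> bnd y B -> U t (fun k => y k - c) k = U t y k - c.
Proof. intros Ht Hy. replace (fun k => y k - c) with (fun k => 1 * y k + (-1) * (fun _ => c) k)
  by (apply functional_extensionality; intros; ring).
  rewrite (U_lin t y (fun _ => c) B (Rabs c)); auto. rewrite U_const. ring.
  intros k'; lra. Qed.

Lemma U_split t z Bz N C k : 0 < t -> bnd z Bz -> (1 <= N)%nat -> bnd (yN N z) C ->
  Rabs (U t z k) <= (Rabs (U t (Mr N z) k)) + C / t.
Proof.
  intros Ht Hz HN HC. rewrite (decomp N z HN) at 1.
  rewrite (U_lin t (Mr N z) (Ar (yN N z)) Bz (2 * C)); try lra.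
  - assert (Rabs (U t (Ar (yN N z)) k) <= C / t) by (apply U_Ar; auto).
    eapply Rle_trans. apply Rabs_triang. rewrite !Rabs_mult. replace (Rabs 1) with 1 by (rewrite Rabs_R1; auto). replace (Rabs (-1)) with 1 by (rewrite Rabs_left; lra). lra.
  - apply Mr_contr; auto.
  - intros k'. unfold Ar, Tr, G. assert (HC0 := bnd_nonneg _ _ HC).
    pose proof (HC (k' + -1)%Z). pose proof (HC (k' + 1)%Z). pose proof (HC k').
    eapply Rle_trans. apply Rabs_minus_le. rewrite Rabs_mult, Rabs_inv, (Rabs_right 2) by lra.
    assert (Rabs (yN N z (k' + -1)%Z + yN N z (k' + 1)%Z) <= 2 * C) by (eapply Rle_trans; [apply Rabs_triang|lra]).
    lra.
Qed.

Theorem TR2 y B c : bnd y B ->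
  (forall eps, 0 < eps -> exists N0, forall n, (N0 <= n)%nat -> (1 <= n)%nat -> forall k, Rabs (Mr n y k - c) <= eps) ->
  forall eps, 0 < eps -> exists T, forall t, T <= t -> 0 <= t -> forall k, Rabs (U t y k - c) <= eps.
Proof.
  intros Hy Hc eps He. set (z := fun k => y k - c). set (Bz := B + Rabs c).
  assert (Hz : bnd z Bz) by (apply bnd_shift; auto). assert (HBz := bnd_nonneg _ _ Hz).
  destruct (Hc (eps / 2)) as [N0 HN0]; [lra|].
  set (N := (N0 + 1)%nat). assert (HN : (1 <= N)%nat) by (unfold N; lia).
  assert (HyN : bnd (yN N z) (INR N * Bz)).
  { apply yN_bnd. intros j k Hj. eapply Rle_trans. apply S_bound; eauto.
    apply Rmult_le_compat_r; auto. apply le_INR; lia. apply Rmult_le_pos; auto; apply pos_INR. }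
  assert (HM : bnd (Mr N z) (eps / 2)).
  { intros k. unfold z. rewrite Mr_shift by auto. apply HN0; unfold N; lia. }
  exists (2 * INR N * Bz / eps + 1). intros t Ht Ht0 k.
  assert (Htp : 0 < t).
  { assert (0 <= 2 * INR N * Bz / eps). { apply Rle_mult_inv_pos; [|lra]. assert (0 <= INR N) by apply pos_INR. nra. } lra. }
  rewrite <- (U_shift t y B c k) by (auto; lra). fold z.
  eapply Rle_trans. apply (U_split t z Bz N (INR N * Bz)); auto.
  assert (Rabs (U t (Mr N z) k) <= eps / 2) by (apply (U_bnd t (Mr N z)); auto; lra).
  assert (INR N * Bz / t <= eps / 2).
  { apply (Rmult_le_reg_r t); auto. unfold Rdiv. rewrite Rmult_assoc, Rinv_l by lra.
    assert (2 * INR N * Bz / eps * eps = 2 * INR N * Bz) by (field; lra). nra. }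
  lra.
Qed.

Lemma lim_le a b A N1 : 0 <= A -> (forall N, (N1 <= N)%nat -> (1 <= N)%nat -> a <= A / INR N + b) -> a <= b.
Proof.
  intros HA H. destruct (Rle_dec a b) as [|Hn]; auto. exfalso.
  assert (Hd : 0 < (a - b) / (A + 1)) by (apply Rdiv_lt_0_compat; lra).
  destruct (archimed_cor1 _ Hd) as [N [HN1 HN2]].
  assert (HNpos : 0 < INR N) by (apply lt_0_INR; lia).
  specialize (H (N + N1)%nat ltac:(lia) ltac:(lia)).
  assert (INR N <= INR (N + N1)) by (apply le_INR; lia).
  assert (A / INR (N + N1) <= A / INR N).
  { unfold Rdiv. apply Rmult_le_compat_l; auto. apply Rinv_le_contravar; auto. }
  assert (A / INR N < a - b).
  { assert (A * / INR N <= (A + 1) * / INR N) by (apply Rmult_le_compat_r; [left; apply Rinv_0_lt_compat; auto|lra]).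
    assert ((A + 1) * / INR N < (A + 1) * ((a - b) / (A + 1))) by (apply Rmult_lt_compat_l; lra).
    replace ((A + 1) * ((a - b) / (A + 1))) with (a - b) in H3 by (field; lra).
    unfold Rdiv; lra. }
  lra.
Qed.

Theorem TR3 y B c K N0 : bnd y B ->
  (forall n, (N0 <= n)%nat -> (1 <= n)%nat -> forall k, Rabs (Mr n y k - c) <= K / INR n) ->
  exists M, forall t, 0 < t -> forall k, Rabs (U t y k - c) <= M / t.
Proof.
  intros Hy Hc. set (z := fun k => y k - c). set (Bz := B + Rabs c).
  assert (Hz : bnd z Bz) by (apply bnd_shift; auto). assert (HBz := bnd_nonneg _ _ Hz).
  assert (HK := Rabs_pos K).
  set (Cb := Bz + Rabs K + INR N0 * Bz).
  assert (HN0 := pos_INR N0).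
  assert (HCb : 0 <= Cb) by (unfold Cb; nra).
  assert (HS : forall j k, Rabs (lsum (fun i => Tpow i z k) (S j)) <= Cb).
  { intros j k. destruct (le_lt_dec N0 j) as [Hj|Hj].
    - destruct j.
      + simpl. rewrite Rplus_0_l. eapply Rle_trans. apply Hz. unfold Cb; nra.
      + rewrite lsum_shift. simpl Tpow at 1.
        assert (E : lsum (fun i => Tpow (S i) z k) (S j) = INR (S j) * Mr (S j) z k).
        { unfold Mr. field. apply not_0_INR; lia. }
        rewrite E. unfold z at 2. rewrite Mr_shift by lia.
        assert (Rabs (Mr (S j) y k - c) <= K / INR (S j)) by (apply Hc; lia).
        assert (0 < INR (S j)) by (apply lt_0_INR; lia).
        eapply Rle_trans. apply Rabs_triang. rewrite Rabs_mult, (Rabs_right (INR (S j))) by lra.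
        assert (INR (S j) * Rabs (Mr (S j) y k - c) <= K).
        { apply (Rmult_le_compat_l (INR (S j))) in H; [|lra].
          replace (INR (S j) * (K / INR (S j))) with K in H by (field; lra). auto. }
        pose proof (Hz k). pose proof (Rle_abs K). unfold Cb. nra.
    - eapply Rle_trans. apply S_bound; eauto. unfold Cb.
      assert (INR (S j) <= INR N0) by (apply le_INR; lia). nra. }
  exists Cb. intros t Ht k.
  rewrite <- (U_shift t y B c k) by (auto; lra). fold z.
  apply (lim_le _ _ (Rabs K) (N0 + 1)); auto. intros N HN HN1.
  eapply Rle_trans. apply (U_split t z Bz N Cb); auto.
  { apply yN_bnd; auto. }
  apply Rplus_le_compat_r. apply (U_bnd t (Mr N z)); [lra|].
  intros k'. unfold z. rewrite Mr_shift by lia. eapply Rle_trans. apply Hc; lia.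
  unfold Rdiv. apply Rmult_le_compat_r. left; apply Rinv_0_lt_compat, lt_0_INR; lia. apply Rle_abs.
Qed.

Lemma small_zero x : (forall eps, 0 < eps -> Rabs x <= 3 * eps) -> x = 0.
Proof. intros H. destruct (Req_dec x 0) as [|Hn]; auto. exfalso.
  assert (0 < Rabs x) by (apply Rabs_pos_lt; auto).
  specialize (H (Rabs x / 6)). lra. Qed.

Lemma Z_cases k : exists n, k = Z.of_nat n \/ k = (- Z.of_nat n)%Z.
Proof. exists (Z.abs_nat k). lia. Qed.

Lemma Mr_Ar n w B k : (1 <= n)%nat -> bnd w B -> Rabs (Mr n (Ar w) k) <= 2 * B / INR n.
Proof.
  intros Hn Hw. unfold Mr.
  rewrite (lsum_ext_lt _ (fun j => Tpow (S (S j)) w k - Tpow (S j) w k)).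
  2:{ intros j Hj. unfold Ar.
      replace (fun k0 => Tr w k0 - w k0) with (fun k0 => 1 * Tr w k0 + (-1) * w k0)
        by (apply functional_extensionality; intros; ring).
      rewrite (Tpow_lin (S j) 1 (-1) (Tr w) w). unfold Tpow. rewrite <- (Nat.iter_succ_r (S j)). simpl. ring. }
  rewrite (lsum_telesc (fun j => Tpow (S j) w k)).
  assert (HB := bnd_nonneg _ _ Hw).
  assert (Rabs (Tpow (S n) w k - Tpow 1 w k) <= 2 * B).
  { eapply Rle_trans. apply Rabs_minus_le. pose proof (Tpow_contr (S n) w B Hw k).
    pose proof (Tpow_contr 1 w B Hw k). lra. }
  assert (0 < INR n) by (apply lt_0_INR; lia).
  rewrite Rabs_mult, Rabs_inv, (Rabs_right (INR n)) by lra.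
  unfold Rdiv. rewrite Rmult_comm. apply Rmult_le_compat_r; auto. left; apply Rinv_0_lt_compat; auto.
Qed.

Theorem TR1 y B ct : bnd y B ->
  (forall eps, 0 < eps -> exists T, forall t, T <= t -> 0 <= t -> forall k, Rabs (U t y k - ct k) <= eps) ->
  forall eps, 0 < eps -> exists N0, forall n, (N0 <= n)%nat -> (1 <= n)%nat -> forall k, Rabs (Mr n y k - ct 0%Z) <= eps.
Proof.
  intros Hy Hg. assert (HB := bnd_nonneg _ _ Hy).
  assert (HA : forall k, Ar ct k = 0).
  { intros k. apply small_zero. intros eps He. destruct (Hg eps He) as [T HT].
    set (t := Rmax T 0 + B / eps + 1).
    assert (HBe : 0 <= B / eps) by (apply Rle_mult_inv_pos; lra).
    assert (Ht1 : T <= t) by (unfold t; pose proof (Rmax_l T 0); lra).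
    assert (Ht0 : 0 < t) by (unfold t; pose proof (Rmax_r T 0); lra).
    assert (H1 : Rabs (Ar (U t y) k) <= B / t) by (apply Ar_U; auto).
    assert (H2 : B / t <= eps).
    { apply (Rmult_le_reg_r t); auto. unfold Rdiv. rewrite Rmult_assoc, Rinv_l by lra.
      assert (B / eps * eps = B) by (field; lra).
      assert (B / eps < t) by (unfold t; pose proof (Rmax_r T 0); lra). nra. }
    assert (E : Ar ct k = Ar (U t y) k - Ar (fun k => U t y k - ct k) k) by (unfold Ar, Tr, G; ring).
    rewrite E. eapply Rle_trans. apply Rabs_minus_le.
    assert (Rabs (Ar (fun k => U t y k - ct k) k) <= 2 * eps).
    { unfold Ar, Tr, G.
      pose proof (HT t Ht1 (Rlt_le _ _ Ht0) (k + -1)%Z). pose proof (HT t Ht1 (Rlt_le _ _ Ht0) (k + 1)%Z).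
      pose proof (HT t Ht1 (Rlt_le _ _ Ht0) k).
      eapply Rle_trans. apply Rabs_minus_le. rewrite Rabs_mult, Rabs_inv, (Rabs_right 2) by lra.
      assert (Rabs (U t y (k + -1)%Z - ct (k + -1)%Z + (U t y (k + 1)%Z - ct (k + 1)%Z)) <= 2 * eps)
        by (eapply Rle_trans; [apply Rabs_triang|lra]).
      lra. }
    lra. }
  assert (HBd : forall k, Rabs (ct k) <= B + 1).
  { intros k. destruct (Hg 1) as [T HT]; [lra|].
    specialize (HT (Rmax T 0) (Rmax_l _ _) (Rmax_r _ _) k).
    pose proof (U_bnd (Rmax T 0) y B (Rmax_r _ _) Hy k).
    replace (ct k) with (U (Rmax T 0) y k - (U (Rmax T 0) y k - ct k)) by ring.
    eapply Rle_trans. apply Rabs_minus_le. lra. }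
  set (e := fun k => ct (k + 1)%Z - ct k).
  assert (HC : forall k, e k = e (k + -1)%Z).
  { intros k. specialize (HA k). unfold Ar, Tr, G in HA. unfold e.
    replace (k + -1 + 1)%Z with k by lia. lra. }
  assert (HC2 : forall n, e (Z.of_nat n) = e 0%Z /\ e (- Z.of_nat n)%Z = e 0%Z).
  { induction n. simpl; auto. destruct IHn as [I1 I2]. split.
    - rewrite HC. replace (Z.of_nat (S n) + -1)%Z with (Z.of_nat n) by lia. auto.
    - rewrite <- I2. rewrite (HC (- Z.of_nat n)%Z). f_equal. lia. }
  assert (HC3 : forall k, e k = e 0%Z).
  { intros k. destruct (Z_cases k) as [n [-> | ->]]; apply HC2. }
  assert (HC4 : forall n, ct (Z.of_nat n) = ct 0%Z + INR n * e 0%Z).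
  { induction n. simpl; ring. rewrite S_INR.
    replace (ct (Z.of_nat (S n))) with (ct (Z.of_nat n) + e (Z.of_nat n))
      by (unfold e; replace (Z.of_nat n + 1)%Z with (Z.of_nat (S n)) by lia; ring).
    rewrite IHn, (HC3 (Z.of_nat n)). ring. }
  assert (He0 : e 0%Z = 0).
  { assert (Rabs (e 0%Z) <= 0).
    { apply (lim_le _ _ (2 * (B + 1)) 1); [lra|]. intros N HN _.
      assert (0 < INR N) by (apply lt_0_INR; lia).
      assert (Rabs (INR N * e 0%Z) <= 2 * (B + 1)).
      { replace (INR N * e 0%Z) with (ct (Z.of_nat N) - ct 0%Z) by (rewrite HC4; ring).
        eapply Rle_trans. apply Rabs_minus_le. pose proof (HBd (Z.of_nat N)). pose proof (HBd 0%Z). lra. }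
      rewrite Rabs_mult, (Rabs_right (INR N)) in H0 by lra.
      apply (Rmult_le_reg_l (INR N)); auto. replace (INR N * (2 * (B + 1) / INR N + 0)) with (2 * (B + 1)) by (field; lra).
      auto. }
    pose proof (Rabs_pos (e 0%Z)). apply Rabs_eq_0. lra. }
  assert (Hconst : forall k, ct k = ct 0%Z).
  { assert (forall n, ct (Z.of_nat n) = ct 0%Z /\ ct (- Z.of_nat n)%Z = ct 0%Z).
    { induction n. simpl; auto. destruct IHn as [I1 I2]. split.
      - rewrite HC4, He0. ring.
      - rewrite <- I2. assert (e (- Z.of_nat (S n))%Z = 0) by (rewrite HC3; auto).
        unfold e in H. replace (- Z.of_nat (S n) + 1)%Z with (- Z.of_nat n)%Z in H by lia. lra. }
    intros k. destruct (Z_cases k) as [n [-> | ->]]; apply H. }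
  set (c := ct 0%Z).
  intros eps He. destruct (Hg (eps / 2)) as [T HT]; [lra|].
  set (t := Rmax T 0). assert (Ht0 : 0 <= t) by apply Rmax_r.
  assert (Hq : 0 < eps / (4 * (t * B) + 1)) by (apply Rdiv_lt_0_compat; [lra|]; assert (0 <= t * B) by nra; lra).
  destruct (archimed_cor1 _ Hq) as [N [HN1 HN2]].
  exists N. intros n Hn Hn1 k.
  set (w := wser t y).
  assert (Hw : bnd w (t * B)) by (apply wser_bnd; auto).
  assert (Edec : (fun k => y k - c) = fun k => (-1) * Ar w k + 1 * (U t y k - c)).
  { apply functional_extensionality; intros k'. unfold w. rewrite (wser_Ar t y B k' Ht0 Hy). ring. }
  rewrite <- Mr_shift by auto. rewrite Edec.
  replace (fun k => (-1) * Ar w k + 1 * (U t y k - c)) with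
    (fun k => (-1) * Ar w k + 1 * (fun k => U t y k - c) k) by reflexivity.
  rewrite Mr_lin.
  assert (P1 : Rabs (Mr n (Ar w) k) <= 2 * (t * B) / INR n) by (apply Mr_Ar; auto).
  assert (P2 : Rabs (Mr n (fun k => U t y k - c) k) <= eps / 2).
  { apply Mr_contr. intros k'. unfold c. rewrite <- (Hconst k'). apply HT. apply Rmax_l. auto. }
  assert (P3 : 2 * (t * B) / INR n <= eps / 2).
  { assert (HNpos : 0 < INR N) by (apply lt_0_INR; lia).
    assert (INR N <= INR n) by (apply le_INR; lia).
    assert (HtB : 0 <= t * B) by nra.
    assert (2 * (t * B) / INR n <= 2 * (t * B) / INR N).
    { unfold Rdiv. apply Rmult_le_compat_l; [lra|]. apply Rinv_le_contravar; auto. }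
    assert (2 * (t * B) / INR N <= 2 * (t * B) * (eps / (4 * (t * B) + 1))).
    { unfold Rdiv at 1. apply Rmult_le_compat_l; lra. }
    assert (2 * (t * B) * (eps / (4 * (t * B) + 1)) <= eps / 2).
    { replace (2 * (t * B) * (eps / (4 * (t * B) + 1))) with (eps / 2 * (4 * (t * B) / (4 * (t * B) + 1))) by (field; lra).
      assert (4 * (t * B) / (4 * (t * B) + 1) <= 1) by (apply frac_le1; lra).
      assert (eps / 2 * (4 * (t * B) / (4 * (t * B) + 1)) <= eps / 2 * 1) by (apply Rmult_le_compat_l; lra). lra. }
    lra. }
  eapply Rle_trans. apply Rabs_triang. rewrite !Rabs_mult.
  replace (Rabs 1) with 1 by (rewrite Rabs_R1; auto). replace (Rabs (-1)) with 1 by (rewrite Rabs_left; lra).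
  lra.
Qed.


Definition re (x : Z -> Cx) : rs := fun k => fst (x k).
Definition im (x : Z -> Cx) : rs := fun k => snd (x k).

Lemma fst_le_Cnorm z : Rabs (fst z) <= Cnorm z.
Proof. unfold Cnorm. rewrite <- sqrt_Rsqr_abs. apply sqrt_le_1_alt. unfold Rsqr.
  pose proof (pow2_ge_0 (snd z)). simpl. nra. Qed.
Lemma snd_le_Cnorm z : Rabs (snd z) <= Cnorm z.
Proof. unfold Cnorm. rewrite <- sqrt_Rsqr_abs. apply sqrt_le_1_alt. unfold Rsqr.
  pose proof (pow2_ge_0 (fst z)). simpl. nra. Qed.
Lemma Cnorm_le z : Cnorm z <= Rabs (fst z) + Rabs (snd z).
Proof. unfold Cnorm. rewrite <- (sqrt_square (Rabs (fst z) + Rabs (snd z))).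
  2:{ pose proof (Rabs_pos (fst z)); pose proof (Rabs_pos (snd z)); lra. }
  apply sqrt_le_1_alt.
  assert (E1 : Rabs (fst z) * Rabs (fst z) = fst z ^ 2) by (rewrite <- Rabs_mult, Rabs_right; [simpl; ring|]; simpl; apply Rle_ge; nra).
  assert (E2 : Rabs (snd z) * Rabs (snd z) = snd z ^ 2) by (rewrite <- Rabs_mult, Rabs_right; [simpl; ring|]; simpl; apply Rle_ge; nra).
  pose proof (Rabs_pos (fst z)); pose proof (Rabs_pos (snd z)). nra. Qed.

Lemma re_bnd x M : (forall k, Cnorm (x k) <= M) -> bnd (re x) M.
Proof. intros H k. unfold re. eapply Rle_trans. apply fst_le_Cnorm. auto. Qed.
Lemma im_bnd x M : (forall k, Cnorm (x k) <= M) -> bnd (im x) M.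
Proof. intros H k. unfold im. eapply Rle_trans. apply snd_le_Cnorm. auto. Qed.

Lemma Cadd_fst a b : fst (Cadd a b) = fst a + fst b. Proof. reflexivity. Qed.
Lemma Cadd_snd a b : snd (Cadd a b) = snd a + snd b. Proof. reflexivity. Qed.

Lemma Csub_fst a b : fst (Csub a b) = fst a - fst b. Proof. reflexivity. Qed.
Lemma Csub_snd a b : snd (Csub a b) = snd a - snd b. Proof. reflexivity. Qed.

Lemma Cscal_fst r a : fst (Cscal r a) = r * fst a. Proof. reflexivity. Qed.
Lemma Cscal_snd r a : snd (Cscal r a) = r * snd a. Proof. reflexivity. Qed.

Lemma fold_fst (f : nat -> Cx) m len :
  fst (fold_right Cadd C0 (map f (seq m len))) = lsum (fun i => fst (f (m + i)%nat)) len /\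
  snd (fold_right Cadd C0 (map f (seq m len))) = lsum (fun i => snd (f (m + i)%nat)) len.
Proof.
  revert m; induction len; intros m. simpl; auto.
  simpl seq. simpl map. simpl fold_right. destruct (IHlen (S m)) as [I1 I2].
  rewrite Cadd_fst, Cadd_snd, I1, I2, !lsum_shift.
  rewrite Nat.add_0_r. split; f_equal; apply lsum_ext_lt; intros; rewrite ?Nat.add_succ_r; reflexivity.
Qed.

Lemma Csum_fst f m n : fst (Csum f m n) = lsum (fun i => fst (f (m + i)%nat)) (S n - m).
Proof. apply fold_fst. Qed.
Lemma Csum_snd f m n : snd (Csum f m n) = lsum (fun i => snd (f (m + i)%nat)) (S n - m).
Proof. apply fold_fst. Qed.

Lemma re_Aop x : re (Aop x) = Ar (re x).
Proof. apply functional_extensionality; intros k. unfold re, Aop, Ar, Tr, G, Csub, Cscal, Cadd, Sshift, Sinv.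
  simpl. replace (k - 1)%Z with (k + -1)%Z by lia. ring. Qed.
Lemma im_Aop x : im (Aop x) = Ar (im x).
Proof. apply functional_extensionality; intros k. unfold im, Aop, Ar, Tr, G, Csub, Cscal, Cadd, Sshift, Sinv.
  simpl. replace (k - 1)%Z with (k + -1)%Z by lia. ring. Qed.

Lemma re_Apow n x : re (Apow n x) = Arpow n (re x).
Proof. induction n; auto. change (re (Aop (Apow n x)) = Ar (Arpow n (re x))). rewrite re_Aop, IHn; auto. Qed.
Lemma im_Apow n x : im (Apow n x) = Arpow n (im x).
Proof. induction n; auto. change (im (Aop (Apow n x)) = Ar (Arpow n (im x))). rewrite im_Aop, IHn; auto. Qed.

Lemma exp_partial_fst t x0 N k :
  fst (exp_partial t x0 N k) = lsum (fun n => t ^ n / INR (fact n) * Arpow n (re x0) k) (S N).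
Proof. unfold exp_partial. rewrite Csum_fst. rewrite Nat.sub_0_r. apply lsum_ext_lt; intros.
  simpl. rewrite <- re_Apow. reflexivity. Qed.
Lemma exp_partial_snd t x0 N k :
  snd (exp_partial t x0 N k) = lsum (fun n => t ^ n / INR (fact n) * Arpow n (im x0) k) (S N).
Proof. unfold exp_partial. rewrite Csum_snd. rewrite Nat.sub_0_r. apply lsum_ext_lt; intros.
  simpl. rewrite <- im_Apow. reflexivity. Qed.

Definition xs (x0 : Z -> Cx) : R -> Z -> Cx := fun t k => (U t (re x0) k, U t (im x0) k).

Lemma xs_sol x0 : linf_bounded x0 -> is_exp_sol x0 (xs x0).
Proof.
  intros [M HM] t Ht eps He.
  destruct (exp_conv t (re x0) M Ht (re_bnd _ _ HM) (eps / 2)) as [N1 H1]; [lra|].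
  destruct (exp_conv t (im x0) M Ht (im_bnd _ _ HM) (eps / 2)) as [N2 H2]; [lra|].
  exists (N1 + N2)%nat. intros N HN k. eapply Rle_trans. apply Cnorm_le.
  change (Rabs (fst (exp_partial t x0 N k) - U t (re x0) k) + Rabs (snd (exp_partial t x0 N k) - U t (im x0) k) <= eps).
  rewrite exp_partial_fst, exp_partial_snd.
  specialize (H1 N ltac:(lia) k). specialize (H2 N ltac:(lia) k). lra.
Qed.

Lemma expsol_eq x0 : linf_bounded x0 -> forall t k, 0 <= t -> expsol x0 t k = xs x0 t k.
Proof.
  intros Hb t k Ht.
  assert (Hs : is_exp_sol x0 (expsol x0)).
  { unfold expsol. apply epsilon_spec. exists (xs x0). apply xs_sol; auto. }
  assert (Hx := xs_sol x0 Hb).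
  assert (Key : forall eps, 0 < eps -> Rabs (fst (expsol x0 t k) - fst (xs x0 t k)) <= 2 * eps /\
                                    Rabs (snd (expsol x0 t k) - snd (xs x0 t k)) <= 2 * eps).
  { intros eps He. destruct (Hs t Ht eps He) as [N1 H1]. destruct (Hx t Ht eps He) as [N2 H2].
    specialize (H1 (N1 + N2)%nat ltac:(lia) k). specialize (H2 (N1 + N2)%nat ltac:(lia) k).
    set (p := exp_partial t x0 (N1 + N2) k) in *.
    pose proof (fst_le_Cnorm (Csub p (expsol x0 t k))). pose proof (fst_le_Cnorm (Csub p (xs x0 t k))).
    pose proof (snd_le_Cnorm (Csub p (expsol x0 t k))). pose proof (snd_le_Cnorm (Csub p (xs x0 t k))).
    rewrite ?Csub_fst, ?Csub_snd in *.
    split.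
    - replace (fst (expsol x0 t k) - fst (xs x0 t k)) with (- (fst p - fst (expsol x0 t k)) + (fst p - fst (xs x0 t k))) by ring.
      eapply Rle_trans. apply Rabs_triang. rewrite Rabs_Ropp. lra.
    - replace (snd (expsol x0 t k) - snd (xs x0 t k)) with (- (snd p - snd (expsol x0 t k)) + (snd p - snd (xs x0 t k))) by ring.
      eapply Rle_trans. apply Rabs_triang. rewrite Rabs_Ropp. lra. }
  assert (E1 : fst (expsol x0 t k) - fst (xs x0 t k) = 0).
  { apply small_zero. intros eps He. destruct (Key eps He). lra. }
  assert (E2 : snd (expsol x0 t k) - snd (xs x0 t k) = 0).
  { apply small_zero. intros eps He. destruct (Key eps He). lra. }
  destruct (expsol x0 t k) as [a b], (xs x0 t k) as [a' b']. simpl in *. f_equal; lra.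
Qed.

Lemma cesaro_fst x0 n k : fst (cesaro x0 n k) = Mr n (re x0) k.
Proof.
  unfold cesaro, Mr. rewrite Cscal_fst, Csum_fst. replace (S n - 1)%nat with n by lia.
  f_equal. apply lsum_ext_lt. intros i Hi. rewrite Cscal_fst, Csum_fst, Nat.sub_0_r.
  unfold Tpow, Tr. rewrite G_iter. f_equal. apply lsum_ext_lt; intros l Hl. rewrite Cscal_fst.
  unfold re. replace (1 + i)%nat with (S i) by lia. replace (0 + l)%nat with l by lia.
  f_equal; f_equal; f_equal; lia.
Qed.
Lemma cesaro_snd x0 n k : snd (cesaro x0 n k) = Mr n (im x0) k.
Proof.
  unfold cesaro, Mr. rewrite Cscal_snd, Csum_snd. replace (S n - 1)%nat with n by lia.
  f_equal. apply lsum_ext_lt. intros i Hi. rewrite Cscal_snd, Csum_snd, Nat.sub_0_r.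
  unfold Tpow, Tr. rewrite G_iter. f_equal. apply lsum_ext_lt; intros l Hl. rewrite Cscal_snd.
  unfold im. replace (1 + i)%nat with (S i) by lia. replace (0 + l)%nat with l by lia.
  f_equal; f_equal; f_equal; lia.
Qed.


Lemma expsol_fst x0 t k c : linf_bounded x0 -> 0 <= t ->
  fst (Csub (expsol x0 t k) c) = U t (re x0) k - fst c /\ snd (Csub (expsol x0 t k) c) = U t (im x0) k - snd c.
Proof. intros Hb Ht. rewrite (expsol_eq x0 Hb t k Ht). split; reflexivity. Qed.



Lemma P2 x0 (Hb : linf_bounded x0) c : cesaro_conv x0 c -> sol_conv x0 c.
Proof.
  intros Hc. pose proof Hb as [M HM].
  assert (Hre : forall eps, 0 < eps -> exists T, forall t, T <= t -> 0 <= t -> forall k, Rabs (U t (re x0) k - fst c) <= eps).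
  { apply (TR2 (re x0) M (fst c) (re_bnd _ _ HM)). intros eps He. destruct (Hc eps He) as [N0 HN0].
    exists N0. intros n Hn Hn1 k. rewrite <- cesaro_fst. eapply Rle_trans; [|apply (HN0 n Hn Hn1 k)].
    apply (fst_le_Cnorm (Csub (cesaro x0 n k) c)). }
  assert (Him : forall eps, 0 < eps -> exists T, forall t, T <= t -> 0 <= t -> forall k, Rabs (U t (im x0) k - snd c) <= eps).
  { apply (TR2 (im x0) M (snd c) (im_bnd _ _ HM)). intros eps He. destruct (Hc eps He) as [N0 HN0].
    exists N0. intros n Hn Hn1 k. rewrite <- cesaro_snd. eapply Rle_trans; [|apply (HN0 n Hn Hn1 k)].
    apply (snd_le_Cnorm (Csub (cesaro x0 n k) c)). }
  intros eps He. destruct (Hre (eps / 2)) as [T1 H1]; [lra|]. destruct (Him (eps / 2)) as [T2 H2]; [lra|].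
  exists (Rmax T1 T2). intros t Ht Ht0 k.
  eapply Rle_trans. apply Cnorm_le. destruct (expsol_fst x0 t k c Hb Ht0) as [E1 E2]. rewrite E1, E2.
  pose proof (H1 t (Rle_trans _ _ _ (Rmax_l T1 T2) Ht) Ht0 k).
  pose proof (H2 t (Rle_trans _ _ _ (Rmax_r T1 T2) Ht) Ht0 k). lra.
Qed.

Lemma P1 x0 (Hb : linf_bounded x0) : good_constellation x0 -> exists c, cesaro_conv x0 c.
Proof.
  intros [ct Hct]. pose proof Hb as [M HM].
  assert (Hre := TR1 (re x0) M (fun k => fst (ct k)) (re_bnd _ _ HM)).
  assert (Him := TR1 (im x0) M (fun k => snd (ct k)) (im_bnd _ _ HM)).
  exists (ct 0%Z).
  assert (A1 : forall eps, 0 < eps -> exists N0, forall n, (N0 <= n)%nat -> (1 <= n)%nat -> forall k,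
     Rabs (Mr n (re x0) k - fst (ct 0%Z)) <= eps).
  { apply Hre. intros eps He. destruct (Hct eps He) as [T HT]. exists T. intros t Ht Ht0 k.
    destruct (expsol_fst x0 t k (ct k) Hb Ht0) as [E1 E2]. rewrite <- E1. eapply Rle_trans.
    apply fst_le_Cnorm. apply HT; auto. }
  assert (A2 : forall eps, 0 < eps -> exists N0, forall n, (N0 <= n)%nat -> (1 <= n)%nat -> forall k,
     Rabs (Mr n (im x0) k - snd (ct 0%Z)) <= eps).
  { apply Him. intros eps He. destruct (Hct eps He) as [T HT]. exists T. intros t Ht Ht0 k.
    destruct (expsol_fst x0 t k (ct k) Hb Ht0) as [E1 E2]. rewrite <- E2. eapply Rle_trans.
    apply snd_le_Cnorm. apply HT; auto. }
  intros eps He. destruct (A1 (eps / 2)) as [N1 H1]; [lra|]. destruct (A2 (eps / 2)) as [N2 H2]; [lra|].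
  exists (N1 + N2)%nat. intros n Hn Hn1 k.
  eapply Rle_trans. apply Cnorm_le. rewrite Csub_fst, Csub_snd, cesaro_fst, cesaro_snd.
  pose proof (H1 n ltac:(lia) Hn1 k). pose proof (H2 n ltac:(lia) Hn1 k). lra.
Qed.

Lemma P3 x0 (Hb : linf_bounded x0) c : cesaro_O x0 c -> sol_O x0 c.
Proof.
  intros [K [N0 HK]]. pose proof Hb as [M HM].
  destruct (TR3 (re x0) M (fst c) K N0 (re_bnd _ _ HM)) as [M1 H1].
  { intros n Hn Hn1 k. rewrite <- cesaro_fst. eapply Rle_trans; [|apply (HK n Hn Hn1 k)].
    apply (fst_le_Cnorm (Csub (cesaro x0 n k) c)). }
  destruct (TR3 (im x0) M (snd c) K N0 (im_bnd _ _ HM)) as [M2 H2].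
  { intros n Hn Hn1 k. rewrite <- cesaro_snd. eapply Rle_trans; [|apply (HK n Hn Hn1 k)].
    apply (snd_le_Cnorm (Csub (cesaro x0 n k) c)). }
  exists (M1 + M2), 0. intros t Ht Htp k.
  eapply Rle_trans. apply Cnorm_le. destruct (expsol_fst x0 t k c Hb (Rlt_le _ _ Htp)) as [E1 E2]. rewrite E1, E2.
  pose proof (H1 t Htp k). pose proof (H2 t Htp k).
  replace ((M1 + M2) / t) with (M1 / t + M2 / t) by (field; lra). lra.
Qed.

Theorem theorem3 (x0 : Z -> Cx) (Hb : linf_bounded x0) :
  (good_constellation x0 <-> exists c : Cx, cesaro_conv x0 c) /\
  (forall c : Cx, cesaro_conv x0 c -> sol_conv x0 c) /\
  (forall c : Cx, cesaro_O x0 c -> sol_O x0 c).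
Proof.
  split; [split|split].
  - apply P1; auto.
  - intros [c Hc]. exists (fun _ => c). apply P2; auto.
  - apply P2; auto.
  - apply P3; auto.
Qed.
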